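(* Let $m\ge2$, $\theta\in(0,1]$, and let $\hat P$ be the expected normalized profile. Then Plurality elects candidate $1$ in $\hat P$; Plurality is CM (indeed unison-manipulable) in $\hat P$ if $\theta<\frac{m-2}{3m-2}$, and Plurality is not CM in any continuous profile of some neighborhood of $\hat P$ if $\theta>\frac{m-2}{3m-2}$.
   Context: A ranking is a strict total order on $\{1,\dots,m\}$. A continuous profile consists of the candidate set, a total weight $w(P)>0$ and weights $w(p,P)\ge 0$ for each ranking $p$ summing to $w(P)$; profiles are identified with weight vectors in $\mathbb R^{m!}$ (neighborhoods are taken among continuous profiles of total weight $1$ in this topology). Plurality: $s_{\mathrm{Plu}}(c,P)$ is the total weight of rankings placing $c$ first; the winner has the highest score, ties broken by an arbitrary fixed rule. CM (continuous): a rule $f$ is CM in $P$ if there is a continuous profile $Q$ with the same candidates and total weight, $f(Q)\ne f(P)$, and every ranking $p$ with $w(p,Q)<w(p,P)$ prefers $f(Q)$ to $f(P)$. UM: $f$ is unison-manipulable in $P$ if there are a candidate $c\ne f(P)$ and a ranking $q$ such that moving all weight of the rankings preferring $c$ to $f(P)$ onto $q$ yields a profile where $c$ wins. Expected normalized profile $\hat P$ (for parameters $m$, $\theta$): total weight $1$, weight $\theta+\frac{1-\theta}{m!}$ on $1\succ 2\succ\cdots\succ m$ and $\frac{1-\theta}{m!}$ on each other ranking. *)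

(* Defs.v *)
From HB Require Import structures.
From mathcomp Require Import all_boot all_order all_algebra all_fingroup.
From mathcomp Require Import reals.
Set Implicit Arguments. Unset Strict Implicit. Unset Printing Implicit Defensive.
Import Order.TTheory GRing.Theory Num.Theory.
Local Open Scope ring_scope.

(* Candidates are 'I_m (candidate k+1 of the paper is the ordinal k).
   A ranking is a permutation p of 'I_m, read as: p c = position of
   candidate c in the ranking (position 0 = top). *)
Definition ranking (m : nat) := {perm 'I_m}.

Definition profile (R : realType) (m : nat) := {ffun {perm 'I_m} -> R}.

Definition prefers (m : nat) (p : {perm 'I_m}) (a b : 'I_m) : bool :=
  (p a < p b)%N.

Definition total_weight (R : realType) (m : nat) (P : profile R m) : R :=
  \sum_(p : {perm 'I_m}) P p.

Definition is_profile (R : realType) (m : nat) (P : profile R m) : Prop :=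
  (forall p, 0 <= P p) /\ 0 < total_weight P.

Definition plu_score (R : realType) (m : nat) (P : profile R m) (c : 'I_m) : R :=
  \sum_(p : {perm 'I_m} | nat_of_ord (p c) == 0%N) P p.

Definition plu_top (R : realType) (m : nat) (P : profile R m) : {set 'I_m} :=
  [set c | [forall d, plu_score P d <= plu_score P c]].

Definition tiebreak_ok (m : nat) (tb : {set 'I_m} -> 'I_m) : Prop :=
  forall S : {set 'I_m}, S != set0 -> tb S \in S.

Definition plurality (R : realType) (m : nat) (tb : {set 'I_m} -> 'I_m)
  (P : profile R m) : 'I_m := tb (plu_top P).

Definition CM (R : realType) (m : nat) (f : profile R m -> 'I_m)
  (P : profile R m) : Prop :=
  exists Q : profile R m,
    [/\ is_profile Q, total_weight Q = total_weight P, f Q != f P &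
        forall p, Q p < P p -> prefers p (f Q) (f P)].

Definition unison_move (R : realType) (m : nat) (P : profile R m)
  (c w : 'I_m) (q : {perm 'I_m}) : profile R m :=
  [ffun p => (if prefers p c w then 0 else P p)
             + (if p == q then \sum_(r | prefers r c w) P r else 0)].

Definition UM (R : realType) (m : nat) (f : profile R m -> 'I_m)
  (P : profile R m) : Prop :=
  exists c : 'I_m, c != f P /\
    exists q : {perm 'I_m}, f (unison_move P c (f P) q) = c.

(* expected normalized profile: weight theta + (1-theta)/m! on the identity
   ranking 1 > 2 > ... > m, and (1-theta)/m! on every other ranking *)
Definition expected_profile (R : realType) (m : nat) (theta : R) : profile R m :=
  [ffun p => (if p == 1%g then theta else 0) + (1 - theta) / (m`!)%:R].

(* Main.v *)
Require Import Defs.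
From HB Require Import structures.
From mathcomp Require Import all_boot all_order all_algebra all_fingroup.
From mathcomp Require Import reals.
Import Order.TTheory GRing.Theory Num.Theory.
Local Open Scope ring_scope.

Lemma top_nonempty (R : realType) (m : nat) (i0 : 'I_m) (P : profile R m) :
  plu_top P != set0.
Proof.
apply/set0Pn; exists [arg max_(i > i0) plu_score P i]%O.
rewrite inE; apply/forallP => d.
by case: (arg_maxP (plu_score P) (isT : predT i0)) => x _ H; apply: H.
Qed.

Lemma in_top (R : realType) (m : nat) (P : profile R m) x d :
  x \in plu_top P -> plu_score P d <= plu_score P x.
Proof. by rewrite inE => /forallP. Qed.

Lemma winner (R : realType) (m : nat) tb (P : profile R m) w :
  tiebreak_ok tb -> (forall d, d != w -> plu_score P d < plu_score P w) ->
  plurality tb P = w.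
Proof.
move=> htb H.
have wt : w \in plu_top P.
  rewrite inE; apply/forallP => d; case: (eqVneq d w) => [->|/H /ltW] //.
have /htb : plu_top P != set0 by apply/set0Pn; exists w.
rewrite /plurality; set x := tb _ => xt.
apply/eqP; apply/negPn/negP => /H; have := @in_top _ _ _ _ w xt.
by rewrite leNgt => /negbTE ->.
Qed.

Lemma sum_scores (R : realType) (n : nat) (F : {perm 'I_n.+1} -> R) :
  \sum_(d : 'I_n.+1) \sum_(p : {perm 'I_n.+1} | nat_of_ord (p d) == 0%N) F p = \sum_p F p.
Proof.
under eq_bigr do rewrite big_mkcond.
rewrite exchange_big; apply: eq_bigr => p _ /=.
rewrite (bigD1 (p^-1 ord0)%g) //= permKV eqxx big1 ?addr0 // => d hd.
case: ifP => // /eqP h; case/negP: hd; apply/eqP.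
by apply: (@perm_inj _ p); rewrite permKV; apply: val_inj.
Qed.

Lemma E_val (R : realType) m (th : R) p :
  expected_profile m th p = (if p == 1%g then th else 0) + (1 - th) / (m`!)%:R.
Proof. by rewrite ffunE. Qed.

Lemma E_sum (R : realType) m (th : R) (A : pred {perm 'I_m}) :
  \sum_(p | A p) expected_profile m th p =
  (if A 1%g then th else 0) + \sum_(p | A p) ((1 - th) / (m`!)%:R).
Proof.
under eq_bigr do rewrite E_val.
rewrite big_split /=; congr (_ + _).
case: (boolP (A 1%g)) => H.
  rewrite (bigD1 1%g) //= eqxx big1 ?addr0 // => p /andP[_ /negbTE ->] //.
rewrite big1 // => p Ap; case: eqP => // e; move: H; by rewrite -e Ap.
Qed.

Lemma u_tot (R : realType) m (th : R) :
  \sum_(p : {perm 'I_m}) ((1 - th) / (m`!)%:R) = 1 - th.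
Proof.
rewrite sumr_const card_Sn -[_ *+ m`!]mulr_natr divfK // pnatr_eq0 -lt0n fact_gt0 //.
Qed.

Lemma reidx (R : realType) m (u : R) (A B : pred {perm 'I_m}) t :
  (forall p, A (t * p)%g = B p) ->
  \sum_(p | A p) u = \sum_(p | B p) u.
Proof.
move=> H; rewrite (reindex_inj (mulgI t)) /=; apply: eq_bigl => p; exact: H.
Qed.

Lemma V_const (R : realType) n (u : R) (d : 'I_n.+1) :
  \sum_(p : {perm 'I_n.+1} | nat_of_ord (p d) == 0%N) u =
  \sum_(p : {perm 'I_n.+1} | nat_of_ord (p ord0) == 0%N) u.
Proof.
apply: (@reidx _ _ _ _ _ (tperm d ord0)) => p; by rewrite permM tpermL.
Qed.

Lemma V_val (R : realType) n (u : R) :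
  (\sum_(p : {perm 'I_n.+1} | nat_of_ord (p ord0) == 0%N) u) *+ n.+1 =
  \sum_(p : {perm 'I_n.+1}) u.
Proof.
rewrite -(@sum_scores _ _ (fun _ => u)); under [RHS]eq_bigr do rewrite V_const.
by rewrite [RHS]sumr_const card_ord.
Qed.

Lemma S_val (R : realType) m (u : R) (c z : 'I_m) : c != z ->
  (\sum_(p : {perm 'I_m} | prefers p c z) u) *+ 2 = \sum_(p : {perm 'I_m}) u.
Proof.
move=> hcz; rewrite mulr2n [RHS](bigID (fun p : {perm 'I_m} => prefers p c z)) /=.
congr (_ + _); apply: (@reidx _ _ _ _ _ (tperm c z)) => p /=.
rewrite /prefers !permM tpermL tpermR -leqNgt ltn_neqAle andb_idl // => _.
apply/negP => /eqP/val_inj/perm_inj e; by rewrite e eqxx in hcz.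
Qed.

Lemma V_eq (R : realType) n (th : R) :
  \sum_(p : {perm 'I_n.+1} | nat_of_ord (p ord0) == 0%N) ((1 - th) / (n.+1`!)%:R)
  = (1 - th) / (n.+1)%:R.
Proof.
apply: (@mulIf _ n.+1%:R); first by rewrite pnatr_eq0.
by rewrite divfK ?pnatr_eq0 // mulr_natr V_val u_tot.
Qed.

Lemma scoreE0 (R : realType) n (th : R) :
  plu_score (expected_profile n.+1 th) ord0 = th + (1 - th) / (n.+1)%:R.
Proof. by rewrite /plu_score E_sum perm1 eqxx V_eq. Qed.

Lemma scoreE (R : realType) n (th : R) d : d != ord0 ->
  plu_score (expected_profile n.+1 th) d = (1 - th) / (n.+1)%:R.
Proof.
move=> hd; rewrite /plu_score E_sum perm1 V_const V_eq.
case: eqP => [e|_]; last by rewrite add0r.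
by case/eqP: hd; apply: val_inj.
Qed.

Lemma prefE (R : realType) n (th : R) c : c != ord0 ->
  \sum_(p : {perm 'I_n.+1} | prefers p c ord0) expected_profile n.+1 th p = (1 - th) / 2.
Proof.
move=> hc; rewrite E_sum.
have -> : prefers 1%g c ord0 = false by rewrite /prefers !perm1.
rewrite add0r.
apply: (@mulIf _ 2); first by rewrite pnatr_eq0.
by rewrite divfK ?pnatr_eq0 // mulr_natr S_val // u_tot.
Qed.

Lemma sum_ind (R : realType) m (A : pred {perm 'I_m}) q (v : R) :
  \sum_(p | A p) (if p == q then v else 0) = if A q then v else 0.
Proof.
case: (boolP (A q)) => H.
  rewrite (bigD1 q) //= eqxx big1 ?addr0 // => p /andP[_ /negbTE ->] //.
rewrite big1 // => p Ap; case: eqP => // e; move: H; by rewrite -e Ap.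
Qed.

Lemma pref_first m (p : {perm 'I_m}) c z : c != z ->
  nat_of_ord (p c) == 0%N -> prefers p c z.
Proof.
move=> hcz /eqP h; rewrite /prefers h lt0n; apply/negP => /eqP h2.
have : p c = p z by apply: val_inj => /=; rewrite h h2.
by move/perm_inj => e; rewrite e eqxx in hcz.
Qed.

Lemma notpref_first m (p : {perm 'I_m}) c z :
  nat_of_ord (p z) == 0%N -> ~~ prefers p c z.
Proof. by move=> /eqP h; rewrite /prefers h ltn0. Qed.

Lemma um_score (R : realType) m (P : profile R m) c w q d :
  plu_score (unison_move P c w q) d =
  \sum_(p : {perm 'I_m} | nat_of_ord (p d) == 0%N) (if prefers p c w then 0 else P p)
  + (if nat_of_ord (q d) == 0%N then \sum_(r | prefers r c w) P r else 0).
Proof.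
rewrite /plu_score; under eq_bigr do rewrite ffunE.
by rewrite big_split /= sum_ind.
Qed.

Lemma um_total (R : realType) m (P : profile R m) c w q :
  total_weight (unison_move P c w q) = total_weight P.
Proof.
rewrite /total_weight; under eq_bigr do rewrite ffunE.
rewrite big_split /=.
have -> : \sum_(i : {perm 'I_m}) (if i == q then \sum_(r | prefers r c w) P r else 0)
   = \sum_(r | prefers r c w) P r by rewrite (@sum_ind _ _ predT).
rewrite (bigID (fun p => prefers p c w)) /= big1; last by move=> p ->.
rewrite add0r [RHS](bigID (fun p => prefers p c w)) /= addrC; congr (_ + _).
by apply: eq_bigr => p /negbTE ->.
Qed.

Lemma dev (R : realType) m (P Q : profile R m) e (A : pred {perm 'I_m}) :
  (forall p, `|P p - Q p| < e) ->
  `|\sum_(p | A p) P p - \sum_(p | A p) Q p| <= e *+ m`!.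
Proof.
move=> H; have e0 : 0 <= e by apply: ltW; apply: le_lt_trans (H 1%g).
rewrite -sumrB; apply: le_trans (ler_norm_sum _ _ _) _.
apply: (@le_trans _ _ (\sum_(p | A p) e)); first by apply: ler_sum => p _; apply: ltW.
rewrite big_mkcond -card_Sn -sumr_const; apply: ler_sum => p _.
by case: ifP.
Qed.

Arguments pref_first {m p c z}.
Arguments notpref_first {m p} c {z}.
Arguments prefE {R n th c}.
Arguments dev {R m P Q e} A.
Arguments top_nonempty {R m} i0 {P}.
From mathcomp Require Import ring lra.

Theorem mainTheorem5 (R : realType) (m : nat) (theta : R)
  (tb : {set 'I_m} -> 'I_m) :
  (2 <= m)%N -> 0 < theta <= 1 -> tiebreak_ok tb ->
  [/\ nat_of_ord (plurality tb (expected_profile m theta)) = 0%N,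
      theta < (m%:R - 2) / (3 * m%:R - 2) ->
        UM (plurality tb) (expected_profile m theta) /\
        CM (plurality tb) (expected_profile m theta) &
      (m%:R - 2) / (3 * m%:R - 2) < theta ->
        exists eps : R, 0 < eps /\
          forall P : profile R m, is_profile P -> total_weight P = 1 ->
            (forall p, `|P p - expected_profile m theta p| < eps) ->
            ~ CM (plurality tb) P].
Proof.
move: tb; case: m => [|[|n]] tb // _ /andP[th0 th1] htb.
set N := n.+2.
set E := expected_profile N theta.
set x : R := N%:R.
set V := (1 - theta) / x.
have x2 : 2 <= x by rewrite /x ler_nat.
have hV : V * x = 1 - theta by rewrite /V divfK // pnatr_eq0.
have x32 : 0 < 3 * x - 2 by lra.
have s0 := scoreE0 R n.+1 theta; rewrite -/N -/E -/x -/V in s0.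
have sd : forall d, d != ord0 -> plu_score E d = V.
  by move=> d hd; rewrite /E scoreE.
have w0 : plurality tb E = ord0.
  apply: winner => // d hd; rewrite sd // s0; lra.
split; first by rewrite w0.
- move=> hth; rewrite ltr_pdivlMr // in hth.
  have x2' : 2 < x by nra.
  set c1 : 'I_N := @Ordinal N 1 isT.
  have c10 : c1 != ord0 by [].
  set q := tperm (ord0 : 'I_N) c1.
  set Q0 := unison_move E c1 ord0 q.
  have hS := prefE (th := theta) c10; rewrite -/N -/E in hS.
  have wQ : plurality tb Q0 = c1.
    apply: winner => // d hd.
    have -> : plu_score Q0 c1 = (1 - theta) / 2.
      rewrite um_score big1; last first.
        by move=> p hp; rewrite (pref_first c10 hp).
      by rewrite add0r /q tpermR eqxx hS.
    rewrite um_score.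
    case: (eqVneq d ord0) => [->|hd0].
      rewrite /q tpermL /= addr0.
      rewrite (eq_bigr (fun p => E p)); last first.
        by move=> p hp; rewrite (negbTE (notpref_first c1 hp)).
      rewrite -/(plu_score E ord0) s0; nra.
    rewrite /q tpermD; last 2 first.
      by rewrite eq_sym. by rewrite eq_sym.
    have -> : (nat_of_ord d == 0%N) = false.
      by apply/negbTE; apply: contra hd0 => /eqP h; apply/eqP; apply: val_inj.
    rewrite addr0.
    apply: (@le_lt_trans _ _ (plu_score E d)).
      apply: ler_sum => p _; case: ifP => // _.
      by rewrite /E E_val; apply: addr_ge0; [case: ifP => _; lra | apply: divr_ge0; [lra | apply: ler0n]].
    rewrite sd //; nra.
  split.
    exists c1; split; first by rewrite w0.
    by exists q; rewrite w0.
  exists Q0.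
  have E0 : forall p, 0 <= E p.
    by move=> p; rewrite /E E_val; apply: addr_ge0; [case: ifP => _; lra | apply: divr_ge0; [lra | apply: ler0n]].
  have TE : total_weight E = 1.
    transitivity (\sum_(p | predT p) E p); first by [].
    by rewrite /E E_sum /= u_tot; lra.
  split.
  + split; last by rewrite /Q0 um_total TE; lra.
    move=> p; rewrite /Q0 ffunE; apply: addr_ge0.
      by case: ifP.
    by case: ifP => _ //; rewrite hS; lra.
  + by rewrite /Q0 um_total.
  + by rewrite wQ w0.
  + move=> p; rewrite wQ w0 /Q0 ffunE.
    case: ifP => // _; move=> h; exfalso; move: h; apply/negP; rewrite -leNgt.
    rewrite lerDl; case: ifP => _ //; rewrite hS; lra.
- move=> hth; rewrite ltr_pdivrMr // in hth.
  set g := theta + V - (1 - theta) / 2.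
  have g0 : 0 < g by rewrite /g; nra.
  have gt : g <= theta by rewrite /g; nra.
  set F : R := (N`!)%:R.
  have F0 : 0 < F by rewrite /F ltr0n fact_gt0.
  exists (g / (3 * F)); split; first by apply: divr_gt0 => //; lra.
  move=> P [Pge Ppos] PT hclose.
  have D : forall A : pred {perm 'I_N},
      `|\sum_(p | A p) P p - \sum_(p | A p) E p| <= g / 3.
    move=> A; apply: le_trans (dev A hclose) _.
    rewrite -[_ *+ N`!]mulr_natr -/F le_eqVlt; apply/orP; left; apply/eqP.
    by field; rewrite pnatr_eq0 -?lt0n ?fact_gt0.
  have sP0 : theta + V - g / 3 <= plu_score P ord0.
    by have := D (fun p => nat_of_ord (p ord0) == 0%N); rewrite ler_distl -/(plu_score P ord0) -/(plu_score E ord0) s0 => /andP[].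
  have sPd : forall d, d != ord0 -> plu_score P d <= V + g / 3.
    move=> d hd; have := D (fun p => nat_of_ord (p d) == 0%N).
    by rewrite ler_distl -/(plu_score P d) -/(plu_score E d) sd // => /andP[].
  have wP : plurality tb P = ord0.
    apply: winner => // d hd; apply: le_lt_trans (sPd d hd) _.
    apply: lt_le_trans sP0; lra.
  case=> Q [[Qge Qpos] QT hne hman].
  rewrite wP in hne hman.
  set c := plurality tb Q in hne hman.
  have ct : c \in plu_top Q by apply: htb; apply: (top_nonempty ord0).
  have h1 := @in_top _ _ _ _ ord0 ct.
  have notpref : forall p, ~~ prefers p c ord0 -> P p <= Q p.
    by move=> p hp; rewrite leNgt; apply: contra hp; apply: hman.
  have h2 : plu_score P ord0 <= plu_score Q ord0.
    by apply: ler_sum => p hp; apply: notpref; apply: notpref_first.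
  have h3 : plu_score Q c <= \sum_(p | prefers p c ord0) Q p.
    rewrite /plu_score [X in _ <= X]big_mkcond [X in X <= _]big_mkcond.
    apply: ler_sum => p _; case: ifP => hp.
      by rewrite (pref_first hne hp).
    by case: ifP.
  have h4 : \sum_(p | prefers p c ord0) Q p <= \sum_(p | prefers p c ord0) P p.
    have eQ : total_weight Q = \sum_(p | prefers p c ord0) Q p + \sum_(p | ~~ prefers p c ord0) Q p.
      by rewrite /total_weight (bigID (fun p => prefers p c ord0)).
    have eP : total_weight P = \sum_(p | prefers p c ord0) P p + \sum_(p | ~~ prefers p c ord0) P p.
      by rewrite /total_weight (bigID (fun p => prefers p c ord0)).
    have : \sum_(p | ~~ prefers p c ord0) P p <= \sum_(p | ~~ prefers p c ord0) Q p.
      by apply: ler_sum => p hp; apply: notpref.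
    lra.
  have h5 : \sum_(p | prefers p c ord0) P p <= (1 - theta) / 2 + g / 3.
    have := D (fun p => prefers p c ord0).
    by rewrite ler_distl (prefE hne) => /andP[].
  have := le_trans sP0 (le_trans h2 (le_trans h1 (le_trans h3 (le_trans h4 h5)))) => hh.
  have eg : g = theta + V - (1 - theta) / 2 by [].
  lra.
Qed.
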